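(* Let $H$ be a separable infinite-dimensional Hilbert space with a fixed orthonormal basis $(e_i)_{i\in\mathbb{N}}$, and let $\mathcal{L}_2$ be the Hilbert–Schmidt operators on $H$, identified with their matrices in this basis. Let $A=(a_{ij})_{i,j\in\mathbb{N}}$ be a Schur multiplier of $\mathcal{L}_2$ such that the map $S_A\colon\mathcal{L}_2\to\mathcal{L}_2$, $S_A(x)=A\circ x$, is injective. Then $S_A(xy)=S_A(x)S_A(y)$ for all $x,y\in\mathcal{L}_2$ if and only if $a_{ij}=f(i)/f(j)$ for all $i,j$, for some sequence $f\colon\mathbb{N}\to\mathbb{C}$ that is bounded and bounded away from zero.
   Context: $\mathcal{L}_2=\{x\in B(H): \tau(|x|^2)<\infty\}$, where $\tau$ is the canonical trace. $A\circ x$ denotes the entrywise product of the matrix $A$ with the matrix of $x$ in the fixed basis. A Schur multiplier of $\mathcal{L}_2$ is an infinite matrix $A$ such that $A\circ x\in\mathcal{L}_2$ for every $x\in\mathcal{L}_2$; these are exactly the matrices with uniformly bounded entries. *)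

(* Defs.v *)
From Stdlib Require Import Reals.
From Coquelicot Require Import Coquelicot.
Open Scope R_scope.

Definition mat := nat -> nat -> C.

(* Hilbert-Schmidt condition: tau(|x|^2) = sum_{i,j} |x_ij|^2 < oo,
   i.e. the (nonnegative) double series has bounded partial sums. *)
Definition HS (x : mat) : Prop :=
  exists M : R, forall n : nat,
    sum_f_R0 (fun i => sum_f_R0 (fun j => (Cmod (x i j))^2) n) n <= M.

Definition Cseries (u : nat -> C) : C :=
  (Series (fun k => Re (u k)), Series (fun k => Im (u k))).

(* Matrix (= operator) product: (xy)_ij = sum_k x_ik y_kj
   (absolutely convergent for Hilbert-Schmidt x, y). *)
Definition mmul (x y : mat) : mat :=
  fun i j => Cseries (fun k => Cmult (x i k) (y k j)).

Definition schur (A x : mat) : mat := fun i j => Cmult (A i j) (x i j).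

Definition schur_multiplier (A : mat) : Prop :=
  forall x, HS x -> HS (schur A x).

Definition SA_injective (A : mat) : Prop :=
  forall x y, HS x -> HS y -> schur A x = schur A y -> x = y.

(* Main.v *)
Require Import Defs.
From Stdlib Require Import Reals Lra Lia Classical.
From Coquelicot Require Import Coquelicot.
Open Scope R_scope.

Lemma ex_series_pos_bnd (u : nat -> R) M :
  (forall n, 0 <= u n) -> (forall n, sum_f_R0 u n <= M) -> ex_series u.
Proof.
  intros H0 HM.
  destruct (ex_finite_lim_seq_incr (sum_n u) M) as [l Hl].
  - intros n. rewrite sum_Sn. unfold plus; simpl. specialize (H0 (S n)). lra.
  - intros n. rewrite sum_n_Reals. apply HM.
  - exists l. exact Hl.
Qed.

Lemma sum_pos (u : nat -> R) n : (forall k, 0 <= u k) -> 0 <= sum_f_R0 u n.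
Proof. intros H; induction n; simpl; [apply H| specialize (H (S n)); lra]. Qed.

Lemma sum_mono (u : nat -> R) n m : (forall k, 0 <= u k) -> (n <= m)%nat ->
  sum_f_R0 u n <= sum_f_R0 u m.
Proof. intros H Hnm; induction Hnm; simpl; [lra| specialize (H (S m)); lra]. Qed.

Lemma term_le_sum (u : nat -> R) i n : (forall k, 0 <= u k) -> (i <= n)%nat ->
  u i <= sum_f_R0 u n.
Proof.
  intros H Hin; induction Hin.
  - destruct i; simpl; [lra|]. pose proof (sum_pos u i H); lra.
  - simpl. specialize (H (S m)); lra.
Qed.

Lemma HS_row x i : HS x -> exists M, forall n, sum_f_R0 (fun k => Cmod (x i k)^2) n <= M.
Proof.
  intros [M HM]. exists M. intros n.
  assert (Hp : forall i k, 0 <= Cmod (x i k)^2) by (intros; apply pow2_ge_0).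
  apply Rle_trans with (sum_f_R0 (fun k => Cmod (x i k)^2) (Nat.max n i)).
  { apply sum_mono; auto; lia. }
  eapply Rle_trans; [|apply (HM (Nat.max n i))].
  apply (term_le_sum (fun i0 => sum_f_R0 (fun j => Cmod (x i0 j)^2) (Nat.max n i))).
  - intros; apply sum_pos; auto.
  - lia.
Qed.

Lemma HS_col x j : HS x -> exists M, forall n, sum_f_R0 (fun k => Cmod (x k j)^2) n <= M.
Proof.
  intros [M HM]. exists M. intros n.
  assert (Hp : forall i k, 0 <= Cmod (x i k)^2) by (intros; apply pow2_ge_0).
  apply Rle_trans with (sum_f_R0 (fun k => Cmod (x k j)^2) (Nat.max n j)).
  { apply sum_mono; auto; lia. }
  eapply Rle_trans; [|apply (HM (Nat.max n j))].
  apply sum_Rle. intros k _.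
  apply (term_le_sum (fun j0 => Cmod (x k j0)^2)); auto; lia.
Qed.

Lemma im_le_Cmod' (c : C) : Rabs (Im c) <= Cmod c.
Proof.
  pose proof (Cmod2_alt c). pose proof (Cmod_ge_0 c). pose proof (pow2_ge_0 (Re c)).
  unfold Rabs; destruct (Rcase_abs (Im c)); nra.
Qed.

Lemma prod_bound (a b : C) : Cmod (a * b) <= (Cmod a ^2 + Cmod b ^2)/2.
Proof.
  rewrite Cmod_mult. pose proof (pow2_ge_0 (Cmod a - Cmod b)). nra.
Qed.

Lemma conv_series x y i j : HS x -> HS y ->
  ex_series (fun k => Re (x i k * y k j)) /\ ex_series (fun k => Im (x i k * y k j)).
Proof.
  intros Hx Hy. destruct (HS_row x i Hx) as [M1 H1]. destruct (HS_col y j Hy) as [M2 H2].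
  assert (Hb : ex_series (fun k => (Cmod (x i k)^2 + Cmod (y k j)^2)/2)).
  { apply ex_series_pos_bnd with ((M1+M2)/2).
    - intros; pose proof (pow2_ge_0 (Cmod (x i n))); pose proof (pow2_ge_0 (Cmod (y n j))); lra.
    - intros n. specialize (H1 n); specialize (H2 n).
      assert (E : forall (a b : nat -> R) n, sum_f_R0 (fun k => (a k + b k)/2) n
         = (sum_f_R0 a n + sum_f_R0 b n)/2).
      { intros a b m; induction m; simpl; [lra| rewrite IHm; lra]. }
      rewrite E. lra. }
  split; apply (@ex_series_le R_AbsRing R_CompleteNormedModule) with (2 := Hb); intros n; change (norm ?z) with (Rabs z).
  - eapply Rle_trans; [apply re_le_Cmod|apply prod_bound].
  - eapply Rle_trans; [apply im_le_Cmod'|apply prod_bound].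
Qed.

Lemma exs_scal c (a : nat -> R) : ex_series a -> ex_series (fun n => c * a n).
Proof. intros H. exact (@ex_series_scal_l R_AbsRing R_NormedModule c a H). Qed.

Lemma Cseries_scal (c : C) (u : nat -> C) :
  ex_series (fun k => Re (u k)) -> ex_series (fun k => Im (u k)) ->
  Cseries (fun k => Cmult c (u k)) = Cmult c (Cseries u).
Proof.
  intros Hr Hi. unfold Cseries, Cmult; simpl.
  f_equal.
  -     rewrite Series_minus; [rewrite !Series_scal_l; reflexivity| |];
    apply exs_scal; assumption.
  - rewrite Series_plus; [rewrite !Series_scal_l; reflexivity| |];
    apply exs_scal; assumption.
Qed.

From Stdlib Require Import FunctionalExtensionality.

Lemma backward (A : mat) :
  (exists f : nat -> C,
     (exists m M : R, (0 < m)%R /\ forall i, (m <= Cmod (f i) <= M)%R) /\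
     forall i j, A i j = Cdiv (f i) (f j)) ->
  (forall x y : mat, HS x -> HS y ->
     schur A (mmul x y) = mmul (schur A x) (schur A y)).
Proof.
  intros [f [[m [M [Hm Hb]]] HA']] x y Hx Hy.
  assert (Hnz : forall k, f k <> 0%C).
  { intros k E. destruct (Hb k) as [H1 _]. rewrite E, Cmod_0 in H1. lra. }
  apply functional_extensionality; intro i.
  apply functional_extensionality; intro j.
  unfold schur, mmul. rewrite HA'.
  destruct (conv_series x y i j Hx Hy) as [Hr Hi].
  rewrite <- Cseries_scal by assumption.
  f_equal. apply functional_extensionality; intro k.
  rewrite !HA'. field. repeat split; auto.
Qed.

Fixpoint RB (b : nat -> R) (n : nat) : R :=
  match n with 0 => Rmax 1 (b 0%nat) | S k => Rmax (RB b k) (b (S k)) end.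
Definition RBp (b : nat -> R) (n : nat) : R :=
  match n with 0 => 1 | S k => RB b k end.

Lemma RB_eq b n : RB b n = Rmax (RBp b n) (b n).
Proof. destruct n; reflexivity. Qed.

Lemma RBp_ge1 b n : 1 <= RBp b n.
Proof.
  induction n; simpl; [lra|]. destruct n; simpl; [apply Rmax_l|].
  simpl in IHn. eapply Rle_trans; [apply IHn| apply Rmax_l].
Qed.

Lemma RB_geP b n : RBp b n <= RB b n.
Proof. rewrite RB_eq; apply Rmax_l. Qed.
Lemma RB_geb b n : b n <= RB b n.
Proof. rewrite RB_eq; apply Rmax_r. Qed.
Lemma RB_ge1 b n : 1 <= RB b n.
Proof. eapply Rle_trans; [apply RBp_ge1|apply RB_geP]. Qed.
Lemma RB_mono b m n : (m <= n)%nat -> RB b m <= RB b n.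
Proof.
  intros H; induction H; [lra|]. eapply Rle_trans; [apply IHle|].
  apply (RB_geP b (S m0)).
Qed.

Lemma mult_bounded (b : nat -> R) :
  (forall n, 0 <= b n) ->
  (forall c : nat -> R, (exists M, forall n, sum_f_R0 (fun i => c i ^ 2) n <= M) ->
     exists M, forall n, sum_f_R0 (fun i => (b i * c i) ^ 2) n <= M) ->
  exists M, forall i, b i <= M.
Proof.
  intros Hb0 Hmult.
  destruct (classic (exists M, forall i, b i <= M)) as [H|H]; [exact H| exfalso].
  assert (Hub : forall K, exists i, K < b i).
  { intro K; apply NNPP; intro Hn; apply H; exists K; intros i; apply Rnot_lt_le;
    intro; apply Hn; exists i; auto. }
  set (B := RB b). set (Bp := RBp b).
  set (d := fun n => B n - Bp n).
  set (c := fun n => sqrt (d n / B n) / B n).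
  assert (HB1 : forall n, 1 <= B n) by apply RB_ge1.
  assert (HBp1 : forall n, 1 <= Bp n) by apply RBp_ge1.
  assert (Hd0 : forall n, 0 <= d n) by (intros; unfold d; pose proof (RB_geP b n); unfold B, Bp; lra).
  assert (Hc2 : forall n, c n ^ 2 = d n / B n / (B n ^ 2)).
  { intros n. unfold c. assert (0 <= d n / B n).
    { apply Rmult_le_pos; [auto| left; apply Rinv_0_lt_compat; specialize (HB1 n); lra]. }
    pose proof (sqrt_sqrt _ H0). specialize (HB1 n).
    unfold Rdiv at 1. rewrite Rpow_mult_distr.
    replace (sqrt (d n / B n) ^ 2) with (d n / B n) by (simpl; rewrite Rmult_1_r; auto).
    rewrite pow_inv. reflexivity. }
  assert (Hbc : forall n, (b n * c n) ^ 2 = d n / B n).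
  { intros n. rewrite Rpow_mult_distr, Hc2.
    destruct (Req_dec (d n) 0) as [E|E].
    - rewrite E. unfold Rdiv. ring.
    - assert (b n = B n).
      { unfold B. rewrite RB_eq. unfold Rmax. destruct (Rle_dec (RBp b n) (b n)); auto.
        exfalso. apply E. unfold d, B, Bp. rewrite RB_eq. unfold Rmax.
        destruct (Rle_dec (RBp b n) (b n)); [contradiction| ring]. }
      rewrite H0. specialize (HB1 n). field. lra. }
  assert (Hcs : forall n, sum_f_R0 (fun i => c i ^ 2) n <= 1 - 1 / B n ^ 2).
  { assert (Hstep : forall n, c n ^ 2 <= 1 / Bp n ^ 2 - 1 / B n ^ 2).
    { intros n. rewrite Hc2. specialize (HB1 n). specialize (HBp1 n). specialize (Hd0 n).
      unfold d in *. set (x := B n) in *. set (y := Bp n) in *.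
      assert (E : 1 / y ^ 2 - 1 / x ^ 2 - (x - y) / x / x ^ 2
                  = (x - y) * ((x + y) * x - y ^ 2) * / (y ^ 2 * x ^ 3)) by (field; split; lra).
      assert (0 <= (x - y) * ((x + y) * x - y ^ 2) * / (y ^ 2 * x ^ 3)).
      { apply Rmult_le_pos; [apply Rmult_le_pos; nra|].
        left; apply Rinv_0_lt_compat. apply Rmult_lt_0_compat; apply pow_lt; lra. }
      lra. }
    induction n.
    - simpl sum_f_R0. specialize (Hstep 0%nat). unfold Bp, RBp in Hstep. lra.
    - rewrite tech5. specialize (Hstep (S n)). unfold Bp, RBp in Hstep. change (RB b n) with (B n) in Hstep. lra. }
  destruct (Hmult c) as [M HM].
  { exists 1. intros n. specialize (Hcs n). specialize (HB1 n).
    assert (0 < 1 / B n ^ 2). { apply Rdiv_lt_0_compat; [lra| apply pow_lt; lra]. } lra. }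
  set (SS := fun n => sum_f_R0 (fun i => d i / B i) n).
  assert (HSe : forall n, SS n = sum_f_R0 (fun i => (b i * c i) ^ 2) n).
  { intros n. unfold SS. apply sum_eq. intros; rewrite Hbc; reflexivity. }
  assert (Hdv : forall i, 0 <= d i / B i).
  { intros i. apply Rmult_le_pos; [auto| left; apply Rinv_0_lt_compat; specialize (HB1 i); lra]. }
  assert (Hblock : forall m k, SS (m + k)%nat - SS m >= (B (m + k)%nat - B m) / B (m + k)%nat).
  { intros m k. induction k.
    - rewrite Nat.add_0_r. unfold Rdiv. lra.
    - rewrite Nat.add_succ_r. unfold SS at 1. rewrite tech5. fold (SS (m + k)%nat).
      pose proof (RB_mono b (m + k) (S (m + k)) ltac:(lia)).
      pose proof (RB_mono b m (m + k) ltac:(lia)).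
      fold B in H0, H1.
      assert (Ed : d (S (m + k)) = B (S (m + k)) - B (m + k)%nat) by reflexivity.
      rewrite Ed. set (u := B (S (m + k))) in *. set (v := B (m + k)%nat) in *.
      set (w := B m) in *. assert (1 <= v) by apply HB1.
      assert ((v - w) / v >= (v - w) / u).
      { unfold Rdiv. apply Rle_ge. apply Rmult_le_compat_l; [lra|].
        apply Rinv_le_contravar; lra. }
      assert ((v - w) / u + (u - v) / u = (u - w) / u) by (field; lra).
      lra. }
  assert (Hgrow : forall K : nat, exists n, INR K / 2 <= SS n).
  { induction K.
    - exists 0%nat. simpl. unfold SS; simpl. specialize (Hdv 0%nat). lra.
    - destruct IHK as [m Hm].
      destruct (Hub (2 * B m)) as [i Hi].
      pose proof (RB_geb b i). fold B in H0.
      destruct (Nat.le_gt_cases m i) as [Hmi|Hmi].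
      + exists i. replace i with (m + (i - m))%nat in * by lia.
        specialize (Hblock m (i - m)%nat).
        assert (HBm : 1 <= B m) by apply HB1.
        assert ((B (m + (i - m))%nat - B m) / B (m + (i - m))%nat >= 1/2).
        { set (u := B (m + (i - m))%nat) in *. set (w := B m) in *.
          replace ((u - w) / u) with (1 - w * / u) by (field; lra).
          assert (w * / u <= 1/2).
          { apply Rmult_le_reg_r with u; [lra|]. rewrite Rmult_assoc, Rinv_l by lra. lra. }
          lra. }
        rewrite S_INR. lra.
      + exfalso. pose proof (RB_mono b i m ltac:(lia)). fold B in H1.
        specialize (HB1 m). lra. }
  destruct (INR_archimed (/2) M) as [K HK]; [lra|].
  destruct (Hgrow K) as [n Hn]. specialize (HM n). rewrite <- HSe in HM. lra.
Qed.

Definition Eu (i j : nat) : mat :=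
  fun k l => if Nat.eqb k i then (if Nat.eqb l j then RtoC 1 else RtoC 0) else RtoC 0.
Definition zmat : mat := fun _ _ => RtoC 0.

Lemma sum_zero n : sum_f_R0 (fun _ => 0) n = 0.
Proof. induction n; simpl; lra. Qed.

Lemma sum_single (i : nat) (v : R) n : 0 <= v ->
  sum_f_R0 (fun k => if Nat.eqb k i then v else 0) n <= v.
Proof.
  intros Hv. induction n.
  - destruct i; simpl; lra.
  - rewrite tech5. destruct (Nat.eqb (S n) i) eqn:E.
    + apply Nat.eqb_eq in E. subst i.
      rewrite (sum_eq _ (fun _ => 0)). { rewrite sum_zero; lra. }
      intros k Hk. destruct (Nat.eqb k (S n)) eqn:E'; auto.
      apply Nat.eqb_eq in E'; lia.
    + lra.
Qed.

Lemma HS_Eu i j : HS (Eu i j).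
Proof.
  exists 1. intros n.
  eapply Rle_trans; [apply sum_Rle with (Bn := fun k => if Nat.eqb k i then 1 else 0)|].
  - intros k _. unfold Eu. destruct (Nat.eqb k i).
    + eapply Rle_trans; [apply sum_Rle with (Bn := fun l => if Nat.eqb l j then 1 else 0)|].
      * intros l _. destruct (Nat.eqb l j); rewrite Cmod_R, pow2_abs; lra.
      * apply sum_single; lra.
    + rewrite (sum_eq _ (fun _ => 0)); [rewrite sum_zero; lra|].
      intros; rewrite Cmod_R, pow2_abs; simpl; ring.
  - apply sum_single; lra.
Qed.

Lemma HS_zmat : HS zmat.
Proof.
  exists 0. intros n. rewrite (sum_eq _ (fun _ => 0)); [rewrite sum_zero; lra|].
  intros i _. rewrite (sum_eq _ (fun _ => 0)); [apply sum_zero|].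
  intros; unfold zmat; rewrite Cmod_R, pow2_abs; simpl; ring.
Qed.

Lemma Series_single (j : nat) (r : R) : Series (fun k => if Nat.eqb k j then r else 0) = r.
Proof.
  apply is_series_unique.
  change (is_lim_seq (sum_n (fun k => if Nat.eqb k j then r else 0)) r).
  apply is_lim_seq_ext_loc with (fun _ => r); [|apply is_lim_seq_const].
  exists j. intros n Hn. rewrite sum_n_Reals.
  induction Hn.
  - destruct j; [simpl; reflexivity|].
    rewrite tech5, Nat.eqb_refl. rewrite (sum_eq _ (fun _ => 0)); [rewrite sum_zero; ring|].
    intros k Hk. destruct (Nat.eqb k (S j)) eqn:E; auto. apply Nat.eqb_eq in E; lia.
  - rewrite tech5, <- IHHn. destruct (Nat.eqb (S m) j) eqn:E; [apply Nat.eqb_eq in E; lia| ring].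
Qed.

Lemma Cseries_single (j : nat) (v : C) :
  Cseries (fun k => if Nat.eqb k j then v else RtoC 0) = v.
Proof.
  unfold Cseries. destruct v as [a b].
  rewrite (Series_ext _ (fun k => if Nat.eqb k j then a else 0)) by (intros; destruct (Nat.eqb n j); reflexivity).
  rewrite (Series_ext (fun k => Im _) (fun k => if Nat.eqb k j then b else 0)) by (intros; destruct (Nat.eqb n j); reflexivity).
  rewrite !Series_single. reflexivity.
Qed.

Section Fwd.
Variable A : mat.
Hypothesis Hm : forall x y : mat, HS x -> HS y ->
     schur A (mmul x y) = mmul (schur A x) (schur A y).

Lemma A_mul i j k : A i k = Cmult (A i j) (A j k).
Proof.
  pose proof (Hm (Eu i j) (Eu j k) (HS_Eu i j) (HS_Eu j k)) as H.
  apply (f_equal (fun F => F i k)) in H. unfold schur, mmul in H. cbv beta in H.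
  assert (E1 : (fun l => Cmult (Eu i j i l) (Eu j k l k)) = fun l => if Nat.eqb l j then RtoC 1 else RtoC 0).
  { apply functional_extensionality; intro l. unfold Eu. rewrite !Nat.eqb_refl.
    destruct (Nat.eqb l j) eqn:E; [apply Nat.eqb_eq in E; subst l|]; ring. }
  assert (E2 : (fun l => Cmult (Cmult (A i l) (Eu i j i l)) (Cmult (A l k) (Eu j k l k)))
     = fun l => if Nat.eqb l j then Cmult (A i j) (A j k) else RtoC 0).
  { apply functional_extensionality; intro l. unfold Eu. rewrite !Nat.eqb_refl.
    destruct (Nat.eqb l j) eqn:E; [apply Nat.eqb_eq in E; subst l|]; ring. }
  rewrite E1, E2, !Cseries_single in H. rewrite <- H. ring.
Qed.

Hypothesis Hinj : SA_injective A.
Hypothesis HA : schur_multiplier A.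

Lemma A_nz i j : A i j <> RtoC 0.
Proof.
  intro E. assert (H : Eu i j = zmat).
  { apply Hinj; [apply HS_Eu|apply HS_zmat|].
    apply functional_extensionality; intro k. apply functional_extensionality; intro l.
    unfold schur, Eu, zmat. destruct (Nat.eqb k i) eqn:E1; destruct (Nat.eqb l j) eqn:E2; try ring.
    apply Nat.eqb_eq in E1; apply Nat.eqb_eq in E2; subst. rewrite E; ring. }
  apply (f_equal (fun F => F i j)) in H. unfold Eu, zmat in H. rewrite !Nat.eqb_refl in H.
  apply (f_equal fst) in H; simpl in H; lra.
Qed.

Lemma sum_first (v : R) n : sum_f_R0 (fun j => if Nat.eqb j 0 then v else 0) n = v.
Proof. induction n; [reflexivity|]. rewrite tech5, IHn. change (Nat.eqb (S n) 0) with false. cbv iota. ring. Qed.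

Lemma col_bound : exists M, forall i, Cmod (A i 0%nat) <= M.
Proof.
  apply (mult_bounded (fun i => Cmod (A i 0%nat))); [intros; apply Cmod_ge_0|].
  intros c [M HM].
  set (x := fun i j : nat => if Nat.eqb j 0 then RtoC (c i) else RtoC 0).
  assert (Hx : HS x).
  { exists M. intros n. rewrite (sum_eq _ (fun i => c i ^ 2)); [apply HM|].
    intros i _. rewrite (sum_eq _ (fun j => if Nat.eqb j 0 then c i ^ 2 else 0)); [apply sum_first|].
    intros j _. unfold x. destruct (Nat.eqb j 0); rewrite Cmod_R, pow2_abs; [reflexivity| simpl; ring]. }
  destruct (HA x Hx) as [M' HM']. exists M'. intros n.
  rewrite <- (HM' n). apply Req_le. symmetry.
  apply sum_eq. intros i _.
  rewrite (sum_eq _ (fun j => if Nat.eqb j 0 then (Cmod (A i 0%nat) * c i) ^ 2 else 0)); [apply sum_first|].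
  intros j _. unfold schur, x. destruct (Nat.eqb j 0) eqn:E.
  - apply Nat.eqb_eq in E; subst j. rewrite Cmod_mult, Cmod_R, !Rpow_mult_distr, pow2_abs; reflexivity.
  - rewrite Cmod_mult, Cmod_R, Rabs_R0. simpl; ring.
Qed.

Lemma row_bound : exists M, forall i, Cmod (A 0%nat i) <= M.
Proof.
  apply (mult_bounded (fun i => Cmod (A 0%nat i))); [intros; apply Cmod_ge_0|].
  intros c [M HM].
  set (x := fun i j : nat => if Nat.eqb i 0 then RtoC (c j) else RtoC 0).
  assert (Hx : HS x).
  { exists M. intros n.
    rewrite (sum_eq _ (fun i => if Nat.eqb i 0 then sum_f_R0 (fun j => c j ^ 2) n else 0)).
    { rewrite sum_first; apply HM. }
    intros i _. unfold x. destruct (Nat.eqb i 0).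
    - apply sum_eq; intros j _; rewrite Cmod_R, pow2_abs; reflexivity.
    - rewrite (sum_eq _ (fun _ => 0)); [apply sum_zero|].
      intros; rewrite Cmod_R, pow2_abs; simpl; ring. }
  destruct (HA x Hx) as [M' HM']. exists M'. intros n.
  rewrite <- (HM' n). apply Req_le. symmetry.
  rewrite (sum_eq _ (fun i => if Nat.eqb i 0 then sum_f_R0 (fun j => (Cmod (A 0%nat j) * c j) ^ 2) n else 0)).
  { apply sum_first. }
  intros i _. unfold schur, x. destruct (Nat.eqb i 0) eqn:E.
  - apply Nat.eqb_eq in E; subst i. apply sum_eq; intros j _.
    rewrite Cmod_mult, Cmod_R, !Rpow_mult_distr, pow2_abs; reflexivity.
  - rewrite (sum_eq _ (fun _ => 0)); [apply sum_zero|].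
    intros; rewrite Cmod_mult, Cmod_R, Rabs_R0; simpl; ring.
Qed.

Lemma forward : exists f : nat -> C,
     (exists m M : R, (0 < m)%R /\ forall i, (m <= Cmod (f i) <= M)%R) /\
     forall i j, A i j = Cdiv (f i) (f j).
Proof.
  assert (Hii : forall i, A i i = RtoC 1).
  { intros i. pose proof (A_mul i i i) as H. pose proof (A_nz i i).
    transitivity (Cdiv (Cmult (A i i) (A i i)) (A i i)); [field; auto|].
    rewrite <- H. field. auto. }
  exists (fun i => A i 0%nat). split.
  - destruct col_bound as [M1 H1]. destruct row_bound as [M2 H2].
    exists (/ Rmax M2 1), M1. split; [apply Rinv_0_lt_compat; pose proof (Rmax_r M2 1); lra|].
    intros i. split; [|apply H1].
    assert (E : Cmod (A i 0%nat) * Cmod (A 0%nat i) = 1).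
    { rewrite <- Cmod_mult, <- A_mul, Hii. rewrite Cmod_R, Rabs_R1. reflexivity. }
    specialize (H2 i). pose proof (Rmax_l M2 1). pose proof (Rmax_r M2 1).
    pose proof (Cmod_ge_0 (A i 0%nat)).
    apply Rmult_le_reg_r with (Rmax M2 1); [lra|]. rewrite Rinv_l by lra. nra.
  - intros i j. rewrite (A_mul i 0 j).
    assert (E : Cmult (A 0%nat j) (A j 0%nat) = RtoC 1) by (rewrite <- A_mul; apply Hii).
    pose proof (A_nz j 0).
    replace (A 0%nat j) with (Cdiv (RtoC 1) (A j 0%nat)).
    + field. auto.
    + rewrite <- E. field. auto.
Qed.
End Fwd.

Theorem proposition4p1 (A : mat) (HA : schur_multiplier A)
  (Hinj : SA_injective A) :
  (forall x y : mat, HS x -> HS y ->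
     schur A (mmul x y) = mmul (schur A x) (schur A y))
  <->
  (exists f : nat -> C,
     (exists m M : R, (0 < m)%R /\ forall i, (m <= Cmod (f i) <= M)%R) /\
     forall i j, A i j = Cdiv (f i) (f j)).
Proof.
  split.
  - intros Hm. apply forward; assumption.
  - apply backward.
Qed.
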